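(* For every $(i,j)\in\mathcal I_1$ there exist integers $z_1,z_2$ and signs such that $$F_{ij}F_{<(i,j)}=\pm q^{z_1}F_{\le(i,j)},\qquad F_{>(i,j)}F_{ij}=\pm q^{z_2}F_{\ge(i,j)}.$$
   Context: Let $m,n\ge 1$, let $q$ be an indeterminate, and let indices range over $[1,m+n]$. Put $q_i=q$ if $i\le m$ and $q_i=q^{-1}$ if $i>m$. Let $\mathcal I_0=\{(i,j):1\le i<j\le m \text{ or } m+1\le i<j\le m+n\}$, $\mathcal I_1=\{(i,j):1\le i\le m<j\le m+n\}$. The quantum supergroup $U_q=U_q(\mathfrak{gl}(m|n))$ is the associative $\mathbb C(q)$-superalgebra generated by $K_j^{\pm1}$ ($j\in[1,m+n]$) and $E_{i,i+1},F_{i,i+1}$ ($1\le i<m+n$), where $K_j^{\pm1}$ and $E_{i,i+1},F_{i,i+1}$ for $i\ne m$ are even and $E_{m,m+1},F_{m,m+1}$ are odd, subject to: $K_iK_j=K_jK_i$, $K_iK_i^{-1}=1$; $K_iE_{j,j+1}K_i^{-1}=q_i^{\delta_{ij}-\delta_{i,j+1}}E_{j,j+1}$, $K_iF_{j,j+1}K_i^{-1}=q_i^{-(\delta_{ij}-\delta_{i,j+1})}F_{j,j+1}$; $[E_{i,i+1},F_{j,j+1}]=\delta_{ij}\frac{K_iK_{i+1}^{-1}-K_i^{-1}K_{i+1}}{q_i-q_i^{-1}}$; $E_{m,m+1}^2=F_{m,m+1}^2=0$; $E_{i,i+1}E_{j,j+1}=E_{j,j+1}E_{i,i+1}$ and $F_{i,i+1}F_{j,j+1}=F_{j,j+1}F_{i,i+1}$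 for $|i-j|>1$; for $|i-j|=1$, $i\neq m$, and $X\in\{E,F\}$: $X_{i,i+1}^2X_{j,j+1}-(q+q^{-1})X_{i,i+1}X_{j,j+1}X_{i,i+1}+X_{j,j+1}X_{i,i+1}^2=0$; and $[E_{m-1,m+2},E_{m,m+1}]=[F_{m-1,m+2},F_{m,m+1}]=0$. Here for homogeneous $x,y$, $[x,y]=xy-(-1)^{\bar x\bar y}yx$. For $i<j$ with $j>i+1$, $E_{ij}=E_{ic}E_{cj}-q_c^{-1}E_{cj}E_{ic}$ and $F_{ij}=-q_cF_{ic}F_{cj}+F_{cj}F_{ic}$ for $i<c<j$ (independent of $c$); $E_{ij},F_{ij}$ are odd iff $(i,j)\in\mathcal I_1$. Order on $\mathcal I_1$: $(i,j)\prec(s,t)$ iff $j>t$, or $j=t$ and $i<s$. For $I\subseteq\mathcal I_1$, $F_I$ is the product of the $F_{ij}$, $(i,j)\in I$, taken in increasing $\prec$-order ($F_\emptyset=1$). For $(i,j)\in\mathcal I_1$, $F_{\ge(i,j)}$, $F_{>(i,j)}$, $F_{\le(i,j)}$, $F_{<(i,j)}$ denote $F_I$ for $I=\{(s,t)\in\mathcal I_1:(s,t)\succeq(i,j)\}$, $\{(s,t):(s,t)\succ(i,j)\}$, $\{(s,t):(s,t)\preceq(i,j)\}$, $\{(s,t):(s,t)\prec(i,j)\}$ respectively. *)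

(* Defs.v *)
From HB Require Import structures.
From mathcomp Require Import all_boot all_order all_algebra all_field.
Set Implicit Arguments. Unset Strict Implicit. Unset Printing Implicit Defensive.
Import Order.TTheory GRing.Theory Num.Theory.
Local Open Scope ring_scope.

(* The base field C(q): rational functions in an indeterminate over the
   (algebraic) complex numbers algC, and the indeterminate q itself. *)
Definition Cq : fieldType := {fraction {poly algC}}.
Definition qX : Cq := tofrac 'X.

Section Uq.
Variables (K : fieldType) (A : algType K) (m n : nat) (q : K).

Definition qi (i : nat) : K := if (i <= m)%N then q else q^-1.

(* parity of the simple generator E_{i,i+1} / F_{i,i+1}: odd iff i = m *)
Definition par (i : nat) : bool := i == m.

Definition sbr (pa pb : bool) (x y : A) : A := x * y - (-1) ^+ (pa && pb) * (y * x).

Definition dexp (i j : nat) : int := ((i == j) : nat)%:Z - ((i == j.+1) : nat)%:Z.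

Variables (Kp Km E F : nat -> A).
(* Kp i = K_i, Km i = K_i^{-1}, E i = E_{i,i+1}, F i = F_{i,i+1} *)

(* Eg i k = E_{i,i+k+1}, using E_{ij} = E_{ic}E_{cj} - q_c^{-1} E_{cj}E_{ic} with c = j-1 *)
Fixpoint Eg (i k : nat) : A :=
  match k with
  | 0 => E i
  | k'.+1 => let c := (i + k').+1 in Eg i k' * E c - (qi c)^-1 *: (E c * Eg i k')
  end.

(* Fg i k = F_{i,i+k+1}, using F_{ij} = -q_c F_{ic}F_{cj} + F_{cj}F_{ic} with c = j-1 *)
Fixpoint Fg (i k : nat) : A :=
  match k with
  | 0 => F i
  | k'.+1 => let c := (i + k').+1 in - (qi c *: (Fg i k' * F c)) + F c * Fg i k'
  end.

Definition Eij (i j : nat) : A := Eg i (j - i).-1.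
Definition Fij (i j : nat) : A := Fg i (j - i).-1.

(* I_1 = {(i,j) : 1 <= i <= m < j <= m+n}, listed in increasing order for the
   order (i,j) < (s,t) iff j > t, or j = t and i < s. *)
Definition I1seq : seq (nat * nat) :=
  flatten [seq [seq (a, b) | a <- iota 1 m] | b <- rev (iota m.+1 n)].

Definition precI1 (p r : nat * nat) : bool :=
  (r.2 < p.2)%N || ((p.2 == r.2) && (p.1 < r.1)%N).

Definition FI (P : pred (nat * nat)) : A :=
  \prod_(p <- I1seq | P p) Fij p.1 p.2.

Definition F_lt (r : nat * nat) : A := FI (fun p => precI1 p r).
Definition F_le (r : nat * nat) : A := FI (fun p => precI1 p r || (p == r)).
Definition F_gt (r : nat * nat) : A := FI (fun p => precI1 r p).
Definition F_ge (r : nat * nat) : A := FI (fun p => precI1 r p || (p == r)).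

Record Uq_rels : Prop := {
  K_comm : forall i j, (1 <= i <= m + n)%N -> (1 <= j <= m + n)%N ->
    Kp i * Kp j = Kp j * Kp i;
  K_invr : forall i, (1 <= i <= m + n)%N -> Kp i * Km i = 1;
  K_invl : forall i, (1 <= i <= m + n)%N -> Km i * Kp i = 1;
  KE : forall i j, (1 <= i <= m + n)%N -> (1 <= j < m + n)%N ->
    Kp i * E j * Km i = (qi i ^ dexp i j) *: E j;
  KF : forall i j, (1 <= i <= m + n)%N -> (1 <= j < m + n)%N ->
    Kp i * F j * Km i = (qi i ^ (- dexp i j)) *: F j;
  EF : forall i j, (1 <= i < m + n)%N -> (1 <= j < m + n)%N ->
    sbr (par i) (par j) (E i) (F j) =
    if i == j then (qi i - (qi i)^-1)^-1 *: (Kp i * Km i.+1 - Km i * Kp i.+1)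
    else 0;
  E_sq : E m * E m = 0;
  F_sq : F m * F m = 0;
  E_far : forall i j, (1 <= i < m + n)%N -> (1 <= j < m + n)%N ->
    (i.+1 < j)%N || (j.+1 < i)%N -> E i * E j = E j * E i;
  F_far : forall i j, (1 <= i < m + n)%N -> (1 <= j < m + n)%N ->
    (i.+1 < j)%N || (j.+1 < i)%N -> F i * F j = F j * F i;
  E_serre : forall i j, (1 <= i < m + n)%N -> (1 <= j < m + n)%N ->
    (i.+1 == j) || (j.+1 == i) -> i != m ->
    E i * E i * E j - (q + q^-1) *: (E i * E j * E i) + E j * E i * E i = 0;
  F_serre : forall i j, (1 <= i < m + n)%N -> (1 <= j < m + n)%N ->
    (i.+1 == j) || (j.+1 == i) -> i != m ->
    F i * F i * F j - (q + q^-1) *: (F i * F j * F i) + F j * F i * F i = 0;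
  (* [E_{m-1,m+2}, E_{m,m+1}] = 0 (both odd); only meaningful when m, n >= 2 *)
  E_extra : (2 <= m)%N -> (2 <= n)%N -> sbr true true (Eij m.-1 m.+2) (E m) = 0;
  F_extra : (2 <= m)%N -> (2 <= n)%N -> sbr true true (Fij m.-1 m.+2) (F m) = 0
}.

End Uq.

(* Main.v *)
Require Import Defs.
From HB Require Import structures.
From mathcomp Require Import all_boot all_order all_algebra all_field.
Import Order.TTheory GRing.Theory Num.Theory.
Local Open Scope ring_scope.
From mathcomp Require Import ring zify.
Set Implicit Arguments. Unset Strict Implicit. Unset Printing Implicit Defensive.

Lemma qX_nz : qX != 0.
Proof. by rewrite /qX tofrac_eq0 polyX_eq0. Qed.

Inductive sc := SQ | SQi | S1 | S0 | SA of sc & sc | SM of sc & sc | SN of sc.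
Fixpoint sev (s : sc) : Cq :=
  match s with SQ => qX | SQi => qX^-1 | S1 => 1 | S0 => 0
  | SA a b => sev a + sev b | SM a b => sev a * sev b | SN a => - sev a end.

Inductive tm := TV of nat | T0 | T1 | TA of tm & tm | TM of tm & tm | TN of tm | TS of sc & tm.

Definition mono := (int * int * seq nat)%type.

Fixpoint sexp (s : sc) : seq (int * int) :=
  match s with SQ => [:: (1, 1)] | SQi => [:: (1, -1)] | S1 => [:: (1, 0)] | S0 => [::]
  | SA a b => sexp a ++ sexp b
  | SM a b => [seq (x.1 * y.1, x.2 + y.2) | x <- sexp a, y <- sexp b]
  | SN a => [seq (- x.1, x.2) | x <- sexp a] end.

Fixpoint texp (t : tm) : seq mono :=
  match t with
  | TV i => [:: (1, 0, [:: i])] | T0 => [::] | T1 => [:: (1, 0, [::])]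
  | TA a b => texp a ++ texp b
  | TN a => [seq (- x.1.1, x.1.2, x.2) | x <- texp a]
  | TM a b => [seq (x.1.1 * y.1.1, x.1.2 + y.1.2, x.2 ++ y.2) | x <- texp a, y <- texp b]
  | TS s a => [seq (c.1 * x.1.1, c.2 + x.1.2, x.2) | c <- sexp s, x <- texp a]
  end.

Fixpoint weq (u v : seq nat) : bool :=
  match u, v with [::], [::] => true | a :: u', b :: v' => eqn a b && weq u' v' | _, _ => false end.
Fixpoint wlt (u v : seq nat) : bool :=
  match u, v with [::], [::] => false | [::], _ => true | _, [::] => false
  | a :: u', b :: v' => (a < b)%N || (eqn a b && wlt u' v') end.
Definition zeqb (a b : int) : bool :=
  match a, b with Posz x, Posz y => eqn x y | Negz x, Negz y => eqn x y | _, _ => false end.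
Definition zlt (a b : int) : bool :=
  match a, b with Posz x, Posz y => (x < y)%N | Negz _, Posz _ => true
  | Posz _, Negz _ => false | Negz x, Negz y => (y < x)%N end.
Definition zadd (a b : int) : int := a + b.

Fixpoint ins (x : mono) (s : seq mono) : seq mono :=
  match s with
  | [::] => [:: x]
  | y :: s' => if zeqb x.1.2 y.1.2 && weq x.2 y.2 then (x.1.1 + y.1.1, x.1.2, x.2) :: s'
               else if wlt x.2 y.2 || (weq x.2 y.2 && zlt x.1.2 y.1.2) then x :: s
               else y :: ins x s'
  end.

Definition nf (s : seq mono) : seq mono :=
  filter (fun x => ~~ zeqb x.1.1 0) (foldr ins [::] s).

Lemma weqP u v : reflect (u = v) (weq u v).
Proof.
elim: u v => [|a u IH] [|b v] /=.
- by constructor.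
- by constructor.
- by constructor.
apply: (iffP andP) => [[h1 h2]|[e1 e2]].
  move/eqnP: h1 => ->. by case: (IH v) h2 => // ->.
split. by apply/eqnP. by case: (IH v).
Qed.
Lemma zeqbP a b : reflect (a = b) (zeqb a b).
Proof.
case: a => x; case: b => y /=.
- apply: (iffP eqnP) => [->//|h]; by case: h.
- by constructor.
- by constructor.
- apply: (iffP eqnP) => [->//|h]; by case: h.
Qed.

Section NCA.
Variable (A : algType Cq) (l : seq A).

Fixpoint tev (t : tm) : A :=
  match t with TV i => nth 0 l i | T0 => 0 | T1 => 1 | TA a b => tev a + tev b
  | TM a b => tev a * tev b | TN a => - tev a | TS s a => sev s *: tev a end.

Definition wev (w : seq nat) : A := foldr (fun i acc => nth 0 l i * acc) 1 w.
Definition mev (x : mono) : A := ((x.1.1)%:~R * qX ^ x.1.2) *: wev x.2.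
Definition pev (s : seq mono) : A := \sum_(x <- s) mev x.

Lemma wev_cat u v : wev (u ++ v) = wev u * wev v.
Proof. by elim: u => [|a u IH] /=; rewrite ?mul1r // IH mulrA. Qed.

Lemma sexpP s : sev s = \sum_(x <- sexp s) (x.1%:~R * qX ^ x.2).
Proof.
elim: s => /=.
- by rewrite big_seq1 mul1r expr1z.
- by rewrite big_seq1 mul1r exprN1.
- by rewrite big_seq1 mul1r expr0z.
- by rewrite big_nil.
- by move=> a IHa b IHb; rewrite big_cat IHa IHb.
- move=> a IHa b IHb; rewrite big_allpairs_dep IHa IHb mulr_suml; apply: eq_bigr => x _.
  rewrite mulr_sumr; apply: eq_bigr => y _ /=.
  by rewrite intrM expfzDr ?qX_nz // mulrACA.
- by move=> a IHa; rewrite big_map IHa -sumrN; apply: eq_bigr => x _ /=; rewrite intrN mulNr.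
Qed.

Lemma texpP t : tev t = pev (texp t).
Proof.
rewrite /pev; elim: t => /=.
- by move=> i; rewrite big_seq1 /mev /= mul1r expr0z scale1r mulr1.
- by rewrite big_nil.
- by rewrite big_seq1 /mev /= mul1r expr0z scale1r.
- by move=> a IHa b IHb; rewrite big_cat IHa IHb.
- move=> a IHa b IHb; rewrite big_allpairs_dep IHa IHb mulr_suml; apply: eq_bigr => x _.
  rewrite mulr_sumr; apply: eq_bigr => y _ /=.
  rewrite /mev /= wev_cat -scalerAl -scalerAr scalerA.
  by rewrite intrM expfzDr ?qX_nz // mulrACA.
- by move=> a IHa; rewrite big_map IHa -sumrN; apply: eq_bigr => x _ /=;
    rewrite /mev /= intrN mulNr scaleNr.
- move=> s a IHa; rewrite big_allpairs_dep IHa sexpP scaler_suml; apply: eq_bigr => c _.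
  rewrite scaler_sumr; apply: eq_bigr => x _ /=.
  by rewrite /mev /= scalerA intrM expfzDr ?qX_nz // mulrACA.
Qed.

Lemma insP x s : pev (ins x s) = mev x + pev s.
Proof.
rewrite /pev; elim: s => [|y s IH] /=; first by rewrite big_seq1 big_nil addr0.
case: ifP => [/andP [/zeqbP e /weqP w]|_].
  rewrite !big_cons addrA; congr (_ + _).
  by rewrite /mev /= -e -w rmorphD /= mulrDl scalerDl.
case: ifP => _; first by rewrite !big_cons.
by rewrite !big_cons IH addrCA.
Qed.

Lemma nfP s : pev (nf s) = pev s.
Proof.
rewrite /nf.
have -> : pev s = pev (foldr ins [::] s).
  elim: s => [|x s IH] /=; first by [].
  by rewrite insP -IH /pev big_cons.
rewrite /pev big_filter [RHS](bigID (fun x : mono => ~~ zeqb x.1.1 0)) /=.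
rewrite [X in _ + X]big1 ?addr0 // => x /negPn /zeqbP e.
by rewrite /mev e mul0r scale0r.
Qed.

Lemma nc_sound a b : nf (texp (TA a (TN b))) = [::] -> tev a = tev b.
Proof.
move=> h; apply/eqP; rewrite -subr_eq0.
have : tev (TA a (TN b)) = 0 by rewrite texpP -nfP h /pev big_nil.
by move=> /= ->.
Qed.

End NCA.

Ltac find_idx x l :=
  lazymatch l with
  | (x :: _) => constr:(0%N)
  | (_ :: ?l') => let n := find_idx x l' in constr:(n.+1)
  end.

Ltac reify_sc c :=
  lazymatch c with
  | qX => constr:(SQ)
  | qX^-1 => constr:(SQi)
  | 1 => constr:(S1)
  | 0 => constr:(S0)
  | ?a + ?b => let x := reify_sc a in let y := reify_sc b in constr:(SA x y)
  | ?a * ?b => let x := reify_sc a in let y := reify_sc b in constr:(SM x y)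
  | - ?a => let x := reify_sc a in constr:(SN x)
  end.

Ltac reify_tm l t :=
  lazymatch t with
  | ?a + ?b => let x := reify_tm l a in let y := reify_tm l b in constr:(TA x y)
  | ?a * ?b => let x := reify_tm l a in let y := reify_tm l b in constr:(TM x y)
  | - ?a => let x := reify_tm l a in constr:(TN x)
  | ?c *: ?a => let s := reify_sc c in let x := reify_tm l a in constr:(TS s x)
  | 0 => constr:(T0)
  | 1 => constr:(T1)
  | _ => let i := find_idx t l in constr:(TV i)
  end.

Ltac ncring l :=
  lazymatch goal with
  | |- ?L = ?R =>
    let a := reify_tm l L in let b := reify_tm l R in
    apply: (@nc_sound _ l a b); vm_compute; reflexivity
  end.


Lemma q2_nz : qX + qX^-1 != 0.
Proof.
have q0 := qX_nz.
have -> : qX + qX^-1 = (qX ^+ 2 + 1) / qX by rewrite mulrDl expr2 mulfK // div1r.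
rewrite mulf_eq0 invr_eq0 (negbTE q0) orbF.
have -> : qX ^+ 2 + 1 = tofrac ('X^2 + 1%:P : {poly algC}) by rewrite rmorphD rmorphXn /= rmorph1.
rewrite tofrac_eq0; apply: monic_neq0; exact: monicXnaddC.
Qed.

Lemma c_R1h (A : algType Cq) (X f : A)
  (h0 : X * X = 0)
  (h1 : f * f * X - (qX + qX^-1) *: (f * X * f) + X * f * f = 0)
  : (f * X - qX^-1 *: (X * f)) * (f * X - qX^-1 *: (X * f)) = 0.
Proof.
move/eqP: h0; rewrite -subr_eq0 => /eqP h0.
move/eqP: h1; rewrite -subr_eq0 => /eqP h1.
have e : (qX + qX^-1) *: (((f * X - qX^-1 *: (X * f)) * (f * X - qX^-1 *: (X * f))) - (0)) = (qX^-1*qX^-1) *: ((X * X - (0)) * f * f) + ((- 1)) *: ((f * f * X - (qX + qX^-1) *: (f * X * f) + X * f * f - (0)) * X) + ((- 1)*qX^-1*qX^-1) *: (X * (f * f * X - (qX + qX^-1) *: (f * X * f) + X * f * f - (0))) + ((- 1)*qX^-1*qX^-1 + (- 1)) *: (f * (X * X - (0)) * f) + (1) *: (f * f * (X * X - (0))).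
  ncring [:: X; f].
rewrite ?h0 ?h1 in e.
rewrite ?mulr0 ?mul0r ?scaler0 ?addr0 in e.
by move/eqP: e; rewrite scaler_eq0 (negbTE q2_nz) /= subr_eq0 => /eqP.
Qed.

Lemma c_R1v (A : algType Cq) (X f : A)
  (h0 : X * X = 0)
  (h1 : f * f * X - (qX + qX^-1) *: (f * X * f) + X * f * f = 0)
  : (X * f - qX *: (f * X)) * (X * f - qX *: (f * X)) = 0.
Proof.
move/eqP: h0; rewrite -subr_eq0 => /eqP h0.
move/eqP: h1; rewrite -subr_eq0 => /eqP h1.
have e : (qX + qX^-1) *: (((X * f - qX *: (f * X)) * (X * f - qX *: (f * X))) - (0)) = (1) *: ((X * X - (0)) * f * f) + ((- 1)*qX*qX) *: ((f * f * X - (qX + qX^-1) *: (f * X * f) + X * f * f - (0)) * X) + ((- 1)) *: (X * (f * f * X - (qX + qX^-1) *: (f * X * f) + X * f * f - (0))) + ((- 1) + (- 1)*qX*qX) *: (f * (X * X - (0)) * f) + (qX*qX) *: (f * f * (X * X - (0))).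
  ncring [:: X; f].
rewrite ?h0 ?h1 in e.
rewrite ?mulr0 ?mul0r ?scaler0 ?addr0 in e.
by move/eqP: e; rewrite scaler_eq0 (negbTE q2_nz) /= subr_eq0 => /eqP.
Qed.

Lemma c_col (A : algType Cq) (Y f : A)
  (h0 : Y * Y = 0)
  : Y * (Y * f - qX *: (f * Y)) = (- qX) *: ((Y * f - qX *: (f * Y)) * Y).
Proof.
move/eqP: h0; rewrite -subr_eq0 => /eqP h0.
have e : ((Y * (Y * f - qX *: (f * Y))) - ((- qX) *: ((Y * f - qX *: (f * Y)) * Y))) = (1) *: ((Y * Y - (0)) * f) + ((- 1)*qX*qX) *: (f * (Y * Y - (0))).
  ncring [:: Y; f].
rewrite ?h0 in e.
rewrite ?mulr0 ?mul0r ?scaler0 ?addr0 in e.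
by apply/eqP; rewrite -subr_eq0 e.
Qed.

Lemma c_row (A : algType Cq) (X f : A)
  (h0 : X * X = 0)
  : X * (f * X - qX^-1 *: (X * f)) = (- qX) *: ((f * X - qX^-1 *: (X * f)) * X).
Proof.
move/eqP: h0; rewrite -subr_eq0 => /eqP h0.
have e : ((X * (f * X - qX^-1 *: (X * f))) - ((- qX) *: ((f * X - qX^-1 *: (X * f)) * X))) = ((- 1)*qX^-1) *: ((X * X - (0)) * f) + (qX) *: (f * (X * X - (0))).
  ncring [:: X; f].
rewrite ?h0 in e.
rewrite ?mulr0 ?mul0r ?scaler0 ?addr0 in e.
by apply/eqP; rewrite -subr_eq0 e.
Qed.

Lemma c_E5 (A : algType Cq) (Y f : A)
  (h0 : Y * Y = 0)
  (h1 : f * f * Y - (qX + qX^-1) *: (f * Y * f) + Y * f * f = 0)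
  : f * ((Y * f - qX *: (f * Y)) * Y) = ((Y * f - qX *: (f * Y)) * Y) * f.
Proof.
move/eqP: h0; rewrite -subr_eq0 => /eqP h0.
move/eqP: h1; rewrite -subr_eq0 => /eqP h1.
have e : (qX + qX^-1) *: ((f * ((Y * f - qX *: (f * Y)) * Y)) - (((Y * f - qX *: (f * Y)) * Y) * f)) = ((- 1)) *: ((Y * Y - (0)) * f * f) + ((- 1)) *: ((f * f * Y - (qX + qX^-1) *: (f * Y * f) + Y * f * f - (0)) * Y) + (1) *: (Y * (f * f * Y - (qX + qX^-1) *: (f * Y * f) + Y * f * f - (0))) + (1 + qX*qX) *: (f * (Y * Y - (0)) * f) + ((- 1)*qX*qX) *: (f * f * (Y * Y - (0))).
  ncring [:: Y; f].
rewrite ?h0 ?h1 in e.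
rewrite ?mulr0 ?mul0r ?scaler0 ?addr0 in e.
by move/eqP: e; rewrite scaler_eq0 (negbTE q2_nz) /= subr_eq0 => /eqP.
Qed.

Lemma c_SerL (A : algType Cq) (f a b : A)
  (h0 : f * b = b * f)
  : f * f * (a * b) - (qX + qX^-1) *: (f * (a * b) * f) + (a * b) * f * f = (f * f * a - (qX + qX^-1) *: (f * a * f) + a * f * f) * b.
Proof.
move/eqP: h0; rewrite -subr_eq0 => /eqP h0.
have e : ((f * f * (a * b) - (qX + qX^-1) *: (f * (a * b) * f) + (a * b) * f * f) - ((f * f * a - (qX + qX^-1) *: (f * a * f) + a * f * f) * b)) = (qX^-1 + qX) *: (f * a * (f * b - (b * f))) + ((- 1)) *: (a * (f * b - (b * f)) * f) + ((- 1)) *: (a * f * (f * b - (b * f))).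
  ncring [:: f; a; b].
rewrite ?h0 in e.
rewrite ?mulr0 ?mul0r ?scaler0 ?addr0 in e.
by apply/eqP; rewrite -subr_eq0 e.
Qed.

Lemma c_SerR (A : algType Cq) (f a b : A)
  (h0 : f * b = b * f)
  : f * f * (b * a) - (qX + qX^-1) *: (f * (b * a) * f) + (b * a) * f * f = b * (f * f * a - (qX + qX^-1) *: (f * a * f) + a * f * f).
Proof.
move/eqP: h0; rewrite -subr_eq0 => /eqP h0.
have e : ((f * f * (b * a) - (qX + qX^-1) *: (f * (b * a) * f) + (b * a) * f * f) - (b * (f * f * a - (qX + qX^-1) *: (f * a * f) + a * f * f))) = (1) *: ((f * b - (b * f)) * f * a) + ((- 1)*qX^-1 + (- 1)*qX) *: ((f * b - (b * f)) * a * f) + (1) *: (f * (f * b - (b * f)) * a).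
  ncring [:: f; a; b].
rewrite ?h0 in e.
rewrite ?mulr0 ?mul0r ?scaler0 ?addr0 in e.
by apply/eqP; rewrite -subr_eq0 e.
Qed.

Lemma c_BVe (A : algType Cq) (a b c : A)
  (h0 : a * c = c * a)
  (h1 : b * b * a - (qX + qX^-1) *: (b * a * b) + a * b * b = 0)
  (h2 : a * a * b - (qX + qX^-1) *: (a * b * a) + b * a * a = 0)
  (h3 : b * b * c - (qX + qX^-1) *: (b * c * b) + c * b * b = 0)
  (h4 : c * c * b - (qX + qX^-1) *: (c * b * c) + b * c * c = 0)
  : b * (c * (b * a - qX *: (a * b)) - qX *: ((b * a - qX *: (a * b)) * c)) = (c * (b * a - qX *: (a * b)) - qX *: ((b * a - qX *: (a * b)) * c)) * b.
Proof.
move/eqP: h0; rewrite -subr_eq0 => /eqP h0.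
move/eqP: h1; rewrite -subr_eq0 => /eqP h1.
move/eqP: h2; rewrite -subr_eq0 => /eqP h2.
move/eqP: h3; rewrite -subr_eq0 => /eqP h3.
move/eqP: h4; rewrite -subr_eq0 => /eqP h4.
have e : (qX + qX^-1) *: ((b * (c * (b * a - qX *: (a * b)) - qX *: ((b * a - qX *: (a * b)) * c))) - ((c * (b * a - qX *: (a * b)) - qX *: ((b * a - qX *: (a * b)) * c)) * b)) = ((- 1)*qX*qX) *: ((a * c - (c * a)) * b * b) + ((- 1)*qX*qX) *: ((b * b * a - (qX + qX^-1) *: (b * a * b) + a * b * b - (0)) * c) + ((- 1)) *: ((b * b * c - (qX + qX^-1) *: (b * c * b) + c * b * b - (0)) * a) + (qX*qX) *: (a * (b * b * c - (qX + qX^-1) *: (b * c * b) + c * b * b - (0))) + (1 + qX*qX) *: (b * (a * c - (c * a)) * b) + ((- 1)) *: (b * b * (a * c - (c * a))) + (1) *: (c * (b * b * a - (qX + qX^-1) *: (b * a * b) + a * b * b - (0))).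
  ncring [:: a; b; c].
rewrite ?h0 ?h1 ?h2 ?h3 ?h4 in e.
rewrite ?mulr0 ?mul0r ?scaler0 ?addr0 in e.
by move/eqP: e; rewrite scaler_eq0 (negbTE q2_nz) /= subr_eq0 => /eqP.
Qed.

Lemma c_BVt (A : algType Cq) (a b c : A)
  (h0 : a * c = c * a)
  (h1 : b * b * a - (qX + qX^-1) *: (b * a * b) + a * b * b = 0)
  (h2 : a * a * b - (qX + qX^-1) *: (a * b * a) + b * a * a = 0)
  (h3 : b * b * c - (qX + qX^-1) *: (b * c * b) + c * b * b = 0)
  (h4 : c * c = 0)
  : b * (c * (b * a - qX *: (a * b)) - qX *: ((b * a - qX *: (a * b)) * c)) = (c * (b * a - qX *: (a * b)) - qX *: ((b * a - qX *: (a * b)) * c)) * b.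
Proof.
move/eqP: h0; rewrite -subr_eq0 => /eqP h0.
move/eqP: h1; rewrite -subr_eq0 => /eqP h1.
move/eqP: h2; rewrite -subr_eq0 => /eqP h2.
move/eqP: h3; rewrite -subr_eq0 => /eqP h3.
move/eqP: h4; rewrite -subr_eq0 => /eqP h4.
have e : (qX + qX^-1) *: ((b * (c * (b * a - qX *: (a * b)) - qX *: ((b * a - qX *: (a * b)) * c))) - ((c * (b * a - qX *: (a * b)) - qX *: ((b * a - qX *: (a * b)) * c)) * b)) = ((- 1)*qX*qX) *: ((a * c - (c * a)) * b * b) + ((- 1)*qX*qX) *: ((b * b * a - (qX + qX^-1) *: (b * a * b) + a * b * b - (0)) * c) + ((- 1)) *: ((b * b * c - (qX + qX^-1) *: (b * c * b) + c * b * b - (0)) * a) + (qX*qX) *: (a * (b * b * c - (qX + qX^-1) *: (b * c * b) + c * b * b - (0))) + (1 + qX*qX) *: (b * (a * c - (c * a)) * b) + ((- 1)) *: (b * b * (a * c - (c * a))) + (1) *: (c * (b * b * a - (qX + qX^-1) *: (b * a * b) + a * b * b - (0))).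
  ncring [:: a; b; c].
rewrite ?h0 ?h1 ?h2 ?h3 ?h4 in e.
rewrite ?mulr0 ?mul0r ?scaler0 ?addr0 in e.
by move/eqP: e; rewrite scaler_eq0 (negbTE q2_nz) /= subr_eq0 => /eqP.
Qed.

Lemma c_BHe (A : algType Cq) (a b c : A)
  (h0 : a * c = c * a)
  (h1 : b * b * a - (qX + qX^-1) *: (b * a * b) + a * b * b = 0)
  (h2 : a * a * b - (qX + qX^-1) *: (a * b * a) + b * a * a = 0)
  (h3 : b * b * c - (qX + qX^-1) *: (b * c * b) + c * b * b = 0)
  (h4 : c * c * b - (qX + qX^-1) *: (c * b * c) + b * c * c = 0)
  : b * (c * (b * a - qX^-1 *: (a * b)) - qX^-1 *: ((b * a - qX^-1 *: (a * b)) * c)) = (c * (b * a - qX^-1 *: (a * b)) - qX^-1 *: ((b * a - qX^-1 *: (a * b)) * c)) * b.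
Proof.
move/eqP: h0; rewrite -subr_eq0 => /eqP h0.
move/eqP: h1; rewrite -subr_eq0 => /eqP h1.
move/eqP: h2; rewrite -subr_eq0 => /eqP h2.
move/eqP: h3; rewrite -subr_eq0 => /eqP h3.
move/eqP: h4; rewrite -subr_eq0 => /eqP h4.
have e : (qX + qX^-1) *: ((b * (c * (b * a - qX^-1 *: (a * b)) - qX^-1 *: ((b * a - qX^-1 *: (a * b)) * c))) - ((c * (b * a - qX^-1 *: (a * b)) - qX^-1 *: ((b * a - qX^-1 *: (a * b)) * c)) * b)) = ((- 1)*qX^-1*qX^-1) *: ((a * c - (c * a)) * b * b) + ((- 1)*qX^-1*qX^-1) *: ((b * b * a - (qX + qX^-1) *: (b * a * b) + a * b * b - (0)) * c) + ((- 1)) *: ((b * b * c - (qX + qX^-1) *: (b * c * b) + c * b * b - (0)) * a) + (qX^-1*qX^-1) *: (a * (b * b * c - (qX + qX^-1) *: (b * c * b) + c * b * b - (0))) + (qX^-1*qX^-1 + 1) *: (b * (a * c - (c * a)) * b) + ((- 1)) *: (b * b * (a * c - (c * a))) + (1) *: (c * (b * b * a - (qX + qX^-1) *: (b * a * b) + a * b * b - (0))).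
  ncring [:: a; b; c].
rewrite ?h0 ?h1 ?h2 ?h3 ?h4 in e.
rewrite ?mulr0 ?mul0r ?scaler0 ?addr0 in e.
by move/eqP: e; rewrite scaler_eq0 (negbTE q2_nz) /= subr_eq0 => /eqP.
Qed.

Lemma c_BHb (A : algType Cq) (a b c : A)
  (h0 : a * c = c * a)
  (h1 : b * b * a - (qX + qX^-1) *: (b * a * b) + a * b * b = 0)
  (h2 : a * a = 0)
  (h3 : b * b * c - (qX + qX^-1) *: (b * c * b) + c * b * b = 0)
  (h4 : c * c * b - (qX + qX^-1) *: (c * b * c) + b * c * c = 0)
  : b * (c * (b * a - qX^-1 *: (a * b)) - qX^-1 *: ((b * a - qX^-1 *: (a * b)) * c)) = (c * (b * a - qX^-1 *: (a * b)) - qX^-1 *: ((b * a - qX^-1 *: (a * b)) * c)) * b.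
Proof.
move/eqP: h0; rewrite -subr_eq0 => /eqP h0.
move/eqP: h1; rewrite -subr_eq0 => /eqP h1.
move/eqP: h2; rewrite -subr_eq0 => /eqP h2.
move/eqP: h3; rewrite -subr_eq0 => /eqP h3.
move/eqP: h4; rewrite -subr_eq0 => /eqP h4.
have e : (qX + qX^-1) *: ((b * (c * (b * a - qX^-1 *: (a * b)) - qX^-1 *: ((b * a - qX^-1 *: (a * b)) * c))) - ((c * (b * a - qX^-1 *: (a * b)) - qX^-1 *: ((b * a - qX^-1 *: (a * b)) * c)) * b)) = ((- 1)*qX^-1*qX^-1) *: ((a * c - (c * a)) * b * b) + ((- 1)*qX^-1*qX^-1) *: ((b * b * a - (qX + qX^-1) *: (b * a * b) + a * b * b - (0)) * c) + ((- 1)) *: ((b * b * c - (qX + qX^-1) *: (b * c * b) + c * b * b - (0)) * a) + (qX^-1*qX^-1) *: (a * (b * b * c - (qX + qX^-1) *: (b * c * b) + c * b * b - (0))) + (qX^-1*qX^-1 + 1) *: (b * (a * c - (c * a)) * b) + ((- 1)) *: (b * b * (a * c - (c * a))) + (1) *: (c * (b * b * a - (qX + qX^-1) *: (b * a * b) + a * b * b - (0))).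
  ncring [:: a; b; c].
rewrite ?h0 ?h1 ?h2 ?h3 ?h4 in e.
rewrite ?mulr0 ?mul0r ?scaler0 ?addr0 in e.
by move/eqP: e; rewrite scaler_eq0 (negbTE q2_nz) /= subr_eq0 => /eqP.
Qed.

Lemma c_CRb (A : algType Cq) (Y P Q : A)
  (h0 : Y * Y = 0)
  (h1 : (P * (Y * Q - qX *: (Q * Y)) - qX^-1 *: ((Y * Q - qX *: (Q * Y)) * P)) * Y + Y * (P * (Y * Q - qX *: (Q * Y)) - qX^-1 *: ((Y * Q - qX *: (Q * Y)) * P)) = 0)
  : (P * Y - qX^-1 *: (Y * P)) * (Y * Q - qX *: (Q * Y)) = - ((Y * Q - qX *: (Q * Y)) * (P * Y - qX^-1 *: (Y * P))) + ((qX^-1 - qX) *: (P * Y * Q + Q * Y * P) + (1 - qX^-1 * qX^-1) *: (Y * Q * P)) * Y.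
Proof.
move/eqP: h0; rewrite -subr_eq0 => /eqP h0.
move/eqP: h1; rewrite -subr_eq0 => /eqP h1.
have e : (((P * Y - qX^-1 *: (Y * P)) * (Y * Q - qX *: (Q * Y))) - (- ((Y * Q - qX *: (Q * Y)) * (P * Y - qX^-1 *: (Y * P))) + ((qX^-1 - qX) *: (P * Y * Q + Q * Y * P) + (1 - qX^-1 * qX^-1) *: (Y * Q * P)) * Y)) = ((- 1)*qX^-1*qX^-1) *: ((Y * Y - (0)) * Q * P) + ((- 1)*qX^-1) *: (((P * (Y * Q - qX *: (Q * Y)) - qX^-1 *: ((Y * Q - qX *: (Q * Y)) * P)) * Y + Y * (P * (Y * Q - qX *: (Q * Y)) - qX^-1 *: ((Y * Q - qX *: (Q * Y)) * P)) - (0))) + (1) *: (P * (Y * Y - (0)) * Q) + ((- 1)) *: (P * Q * (Y * Y - (0))) + (1) *: (Q * (Y * Y - (0)) * P).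
  ncring [:: Y; P; Q].
rewrite ?h0 ?h1 in e.
rewrite ?mulr0 ?mul0r ?scaler0 ?addr0 in e.
by apply/eqP; rewrite -subr_eq0 e.
Qed.

Lemma c_CRs (A : algType Cq) (B a f W Y : A)
  (h0 : B * f = f * B)
  (h1 : Y * f = f * Y)
  (h2 : B * a = - (a * B) + W * Y)
  : B * (a * f - qX *: (f * a)) = - ((a * f - qX *: (f * a)) * B) + (W * f - qX *: (f * W)) * Y.
Proof.
move/eqP: h0; rewrite -subr_eq0 => /eqP h0.
move/eqP: h1; rewrite -subr_eq0 => /eqP h1.
move/eqP: h2; rewrite -subr_eq0 => /eqP h2.
have e : ((B * (a * f - qX *: (f * a))) - (- ((a * f - qX *: (f * a)) * B) + (W * f - qX *: (f * W)) * Y)) = ((- 1)*qX) *: ((B * f - (f * B)) * a) + (1) *: ((B * a - (- (a * B) + W * Y)) * f) + ((- 1)) *: (a * (B * f - (f * B))) + ((- 1)*qX) *: (f * (B * a - (- (a * B) + W * Y))) + (1) *: (W * (Y * f - (f * Y))).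
  ncring [:: B; a; f; W; Y].
rewrite ?h0 ?h1 ?h2 in e.
rewrite ?mulr0 ?mul0r ?scaler0 ?addr0 in e.
by apply/eqP; rewrite -subr_eq0 e.
Qed.

Lemma c_NS (A : algType Cq) (y p r Q : A)
  (h0 : y * y = 0)
  (h1 : Q * p = p * Q)
  (h2 : Q * r = r * Q)
  (h3 : r * y = y * r)
  (h4 : p * p * r - (qX + qX^-1) *: (p * r * p) + r * p * p = 0)
  (h5 : r * r * p - (qX + qX^-1) *: (r * p * r) + p * r * r = 0)
  (h6 : p * p * y - (qX + qX^-1) *: (p * y * p) + y * p * p = 0)
  (h7 : Q * Q * y - (qX + qX^-1) *: (Q * y * Q) + y * Q * Q = 0)
  (h8 : (p * (y * Q - qX *: (Q * y)) - qX^-1 *: ((y * Q - qX *: (Q * y)) * p)) * y + y * (p * (y * Q - qX *: (Q * y)) - qX^-1 *: ((y * Q - qX *: (Q * y)) * p)) = 0)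
  : (r * (p * (y * Q - qX *: (Q * y)) - qX^-1 *: ((y * Q - qX *: (Q * y)) * p)) - qX^-1 *: ((p * (y * Q - qX *: (Q * y)) - qX^-1 *: ((y * Q - qX *: (Q * y)) * p)) * r)) * (p * y - qX^-1 *: (y * p)) + (p * y - qX^-1 *: (y * p)) * (r * (p * (y * Q - qX *: (Q * y)) - qX^-1 *: ((y * Q - qX *: (Q * y)) * p)) - qX^-1 *: ((p * (y * Q - qX *: (Q * y)) - qX^-1 *: ((y * Q - qX *: (Q * y)) * p)) * r)) = 0.
Proof.
move/eqP: h0; rewrite -subr_eq0 => /eqP h0.
move/eqP: h1; rewrite -subr_eq0 => /eqP h1.
move/eqP: h2; rewrite -subr_eq0 => /eqP h2.
move/eqP: h3; rewrite -subr_eq0 => /eqP h3.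
move/eqP: h4; rewrite -subr_eq0 => /eqP h4.
move/eqP: h5; rewrite -subr_eq0 => /eqP h5.
move/eqP: h6; rewrite -subr_eq0 => /eqP h6.
move/eqP: h7; rewrite -subr_eq0 => /eqP h7.
move/eqP: h8; rewrite -subr_eq0 => /eqP h8.
have e : (qX + qX^-1) *: (((r * (p * (y * Q - qX *: (Q * y)) - qX^-1 *: ((y * Q - qX *: (Q * y)) * p)) - qX^-1 *: ((p * (y * Q - qX *: (Q * y)) - qX^-1 *: ((y * Q - qX *: (Q * y)) * p)) * r)) * (p * y - qX^-1 *: (y * p)) + (p * y - qX^-1 *: (y * p)) * (r * (p * (y * Q - qX *: (Q * y)) - qX^-1 *: ((y * Q - qX *: (Q * y)) * p)) - qX^-1 *: ((p * (y * Q - qX *: (Q * y)) - qX^-1 *: ((y * Q - qX *: (Q * y)) * p)) * r))) - (0)) = ((- 1)*qX^-1*qX^-1*qX^-1 + qX^-1) *: ((y * y - (0)) * p * p * r * Q) + ((- 1)*qX^-1*qX^-1*qX^-1 + (- 1)*qX^-1) *: ((y * y - (0)) * Q * p * p * r) + (qX^-1*qX^-1*qX^-1*qX^-1 + qX^-1*qX^-1) *: ((y * y - (0)) * Q * p * r * p) + ((- 1)*qX^-1) *: ((Q * r - (r * Q)) * y * p * p * y) + ((- 1)*qX^-1) *: ((r * y - (y * r)) * y * p * p * Q) + (qX^-1*qX^-1 + 1) *: ((r * y - (y * r)) * p * y * p * Q) + ((- 1)*qX^-1*qX^-1) *: ((r * y - (y * r)) * p * p * Q * y) + ((- 1)*qX^-1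 + (- 1)*qX) *: ((r * y - (y * r)) * p * Q * y * p) + (qX^-1*qX^-1 + 1) *: ((r * y - (y * r)) * Q * y * p * p) + (1) *: ((p * p * r - (qX + qX^-1) *: (p * r * p) + r * p * p - (0)) * y * Q * y) + (qX^-1) *: ((p * p * y - (qX + qX^-1) *: (p * y * p) + y * p * p - (0)) * y * r * Q) + ((- 1)) *: ((p * p * y - (qX + qX^-1) *: (p * y * p) + y * p * p - (0)) * r * Q * y) + ((- 1)*qX^-1*qX^-1 + (- 1)) *: (((p * (y * Q - qX *: (Q * y)) - qX^-1 *: ((y * Q - qX *: (Q * y)) * p)) * y + y * (p * (y * Q - qX *: (Q * y)) - qX^-1 *: ((y * Q - qX *: (Q * y)) * p)) - (0)) * p * r) + (qX^-1*qX^-1*qX^-1 + qX^-1) *: (((p * (y * Q - qX *: (Q * y)) - qX^-1 *: ((y * Q - qX *: (Q * y)) * p)) * y + y * (p * (y * Q - qX *: (Q * y)) - qX^-1 *: ((y * Q - qX *: (Q * y)) * p)) - (0)) * r * p) + ((- 1)*qX^-1*qX^-1*qX^-1 + qX) *: (y * (Q * p - (p * Q)) * y * p * r) + (qX^-1*qX^-1*qX^-1*qX^-1 + qX^-1*qX^-1) *: (y * (Q * p - (p * Q)) * y * r * p) + ((- 1)) *: (y * (Q * p - (p * Q)) * p * y * r) + ((- 1)*qX^-1*qX^-1*qX^-1*qX^-1 + (- 1)*qX^-1*qX^-1) *: (y * (Q * p - (p * Q)) * r * y * p) + (qX^-1*qX^-1*qX^-1 + qX^-1) *: (y * (Q * p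 - (p * Q)) * r * p * y) + ((- 1)*qX^-1*qX^-1) *: (y * (Q * r - (r * Q)) * y * p * p) + (qX^-1) *: (y * (p * p * r - (qX + qX^-1) *: (p * r * p) + r * p * p - (0)) * y * Q) + ((- 1)*qX^-1*qX^-1 + (- 1)) *: (y * (p * p * r - (qX + qX^-1) *: (p * r * p) + r * p * p - (0)) * Q * y) + (qX^-1*qX^-1*qX^-1 + (- 1)*qX^-1) *: (y * (p * p * y - (qX + qX^-1) *: (p * y * p) + y * p * p - (0)) * r * Q) + ((- 1)) *: (y * p * (Q * p - (p * Q)) * y * r) + (qX^-1*qX^-1 + 1) *: (y * p * (Q * r - (r * Q)) * y * p) + (qX^-1*qX^-1*qX^-1 + qX^-1) *: (y * p * (Q * r - (r * Q)) * p * y) + (qX^-1*qX^-1*qX^-1 + qX^-1) *: (y * p * (r * y - (y * r)) * p * Q) + ((- 1)*qX^-1*qX^-1*qX^-1*qX^-1 + 1) *: (y * p * y * (Q * p - (p * Q)) * r) + ((- 1)*qX^-1*qX^-1*qX^-1 + (- 1)*qX^-1) *: (y * p * y * (Q * r - (r * Q)) * p) + ((- 1)*qX^-1*qX^-1*qX^-1*qX^-1 + 1) *: (y * p * y * p * (Q * r - (r * Q))) + ((- 1)*qX^-1*qX^-1*qX^-1 + (- 1)*qX^-1) *: (y * p * y * r * (Q * p - (p * Q))) + ((- 1)*qX^-1*qX^-1 + (- (1+1))) *: (y * p * p * (Q * r - (r * Q)) * y) + ((- 1)*qX^-1) *: (y * p * p * (r * y - (y * r)) * Q) + (qX^-1*qX^-1*qX^-1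 + qX^-1) *: (y * p * p * y * (Q * r - (r * Q))) + (qX^-1*qX^-1 + (1+1)) *: (y * p * p * Q * (r * y - (y * r))) + (qX^-1*qX^-1*qX^-1 + qX^-1) *: (y * p * r * (Q * p - (p * Q)) * y) + (qX^-1*qX^-1*qX^-1 + qX^-1) *: (y * p * r * y * (Q * p - (p * Q))) + ((- 1)*qX^-1*qX^-1*qX^-1*qX^-1 + (- (1+1))*qX^-1*qX^-1 + (- 1)) *: (y * p * Q * (r * y - (y * r)) * p) + (qX^-1 + qX) *: (y * r * (Q * p - (p * Q)) * y * p) + ((- 1)) *: (y * r * (Q * p - (p * Q)) * p * y) + ((- 1)*qX^-1) *: (y * r * (p * p * y - (qX + qX^-1) *: (p * y * p) + y * p * p - (0)) * Q) + ((- 1)) *: (y * r * p * (Q * p - (p * Q)) * y) + (1) *: (y * r * Q * (p * p * y - (qX + qX^-1) *: (p * y * p) + y * p * p - (0))) + (qX^-1*qX^-1) *: (y * Q * (r * y - (y * r)) * p * p) + (1) *: (y * Q * (p * p * y - (qX + qX^-1) *: (p * y * p) + y * p * p - (0)) * r) + (qX^-1*qX^-1) *: (y * Q * y * (p * p * r - (qX + qX^-1) *: (p * r * p) + r * p * p - (0))) + (qX^-1*qX^-1*qX^-1 + qX^-1) *: (p * (y * y - (0)) * Q * p * r) + (qX^-1 + qX) *: (p * (Q * r - (r * Q)) * y * p * y) + (qX^-1*qX^-1 + 1) *: (p * (r * y - (y * r)) * y * p * Q) + ((- 1)*qX^-1 + (- 1)*qX) *: (p * (r * y - (y * r)) * p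 * y * Q) + (qX^-1*qX^-1 + (1+1) + qX*qX) *: (p * (r * y - (y * r)) * p * Q * y) + ((- 1)*qX^-1 + (- 1)*qX) *: (p * (r * y - (y * r)) * Q * y * p) + ((- 1)*qX^-1*qX^-1 + (- 1)) *: (p * y * (Q * r - (r * Q)) * p * y) + (qX^-1 + qX) *: (p * y * p * (Q * r - (r * Q)) * y) + ((- 1)*qX^-1*qX^-1 + (- 1)) *: (p * y * p * y * (Q * r - (r * Q))) + ((- 1)*qX^-1 + (- 1)*qX) *: (p * y * p * Q * (r * y - (y * r))) + ((- 1)*qX^-1*qX^-1 + (- 1)) *: (p * y * r * (Q * p - (p * Q)) * y) + ((- 1)*qX^-1*qX^-1 + (- 1)) *: (p * y * r * y * (Q * p - (p * Q))) + (qX^-1*qX^-1*qX^-1 + qX^-1) *: (p * y * Q * (r * y - (y * r)) * p) + ((- 1)*qX^-1) *: (p * p * (y * y - (0)) * r * Q) + ((- 1)) *: (p * p * (r * y - (y * r)) * Q * y) + ((- 1)*qX^-1*qX^-1 + (- 1)) *: (p * r * (y * y - (0)) * p * Q) + (qX^-1*qX^-1 + 1) *: (p * r * (y * y - (0)) * Q * p) + (qX^-1 + qX) *: (p * r * ((p * (y * Q - qX *: (Q * y)) - qX^-1 *: ((y * Q - qX *: (Q * y)) * p)) * y + y * (p * (y * Q - qX *: (Q * y)) - qX^-1 *: ((y * Q - qX *: (Q * y)) * p)) - (0))) + (qX^-1*qX^-1 + 1) *: (p * r * y * (Q * p - (p * Q)) * y) + (1 + qX*qX) *: (p * r * p * Q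 * (y * y - (0))) + ((- 1)*qX^-1 + (- 1)*qX) *: (p * Q * (y * y - (0)) * p * r) + (qX^-1*qX^-1 + 1) *: (p * Q * (y * y - (0)) * r * p) + (qX^-1*qX^-1 + 1) *: (p * Q * (r * y - (y * r)) * y * p) + ((- 1)*qX^-1 + (- 1)*qX) *: (p * Q * (r * y - (y * r)) * p * y) + ((- 1)*qX^-1*qX^-1 + (- 1)) *: (p * Q * r * (y * y - (0)) * p) + (qX^-1) *: (r * (y * y - (0)) * p * p * Q) + ((- 1)*qX^-1*qX^-1*qX^-1 + (- 1)*qX^-1) *: (r * (y * y - (0)) * Q * p * p) + (1 + qX*qX) *: (r * (Q * p - (p * Q)) * y * p * y) + ((- 1)) *: (r * (p * p * y - (qX + qX^-1) *: (p * y * p) + y * p * p - (0)) * Q * y) + ((- 1)*qX^-1*qX^-1 + (- 1)) *: (r * ((p * (y * Q - qX *: (Q * y)) - qX^-1 *: ((y * Q - qX *: (Q * y)) * p)) * y + y * (p * (y * Q - qX *: (Q * y)) - qX^-1 *: ((y * Q - qX *: (Q * y)) * p)) - (0)) * p) + ((- 1)*qX^-1*qX^-1 + (- 1)) *: (r * y * (Q * p - (p * Q)) * p * y) + ((- 1)*qX^-1*qX^-1 + (- 1)) *: (r * y * p * (Q * p - (p * Q)) * y) + (qX^-1*qX^-1 + 1) *: (r * y * p * y * (Q * p - (p * Q))) + (qX^-1 + qX) *: (r * p * y * (Q * p - (p * Q)) * y) + (qX) *: (r * Q * (p * p * y - (qX + qX^-1) *: (p * y * p) + y * p * p - (0)) *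 y) + ((- 1)*qX) *: (r * Q * p * p * (y * y - (0))) + (qX^-1) *: (Q * (y * y - (0)) * p * p * r) + (qX^-1) *: (Q * (r * y - (y * r)) * p * p * y) + (qX^-1) *: (Q * y * (p * p * r - (qX + qX^-1) *: (p * r * p) + r * p * p - (0)) * y) + ((- 1)*qX^-1) *: (Q * y * (p * p * y - (qX + qX^-1) *: (p * y * p) + y * p * p - (0)) * r) + (qX^-1*qX^-1*qX^-1 + qX^-1) *: (Q * y * p * (r * y - (y * r)) * p) + ((- 1)*qX^-1) *: (Q * y * p * p * (r * y - (y * r))).
  ncring [:: y; p; r; Q].
rewrite ?h0 ?h1 ?h2 ?h3 ?h4 ?h5 ?h6 ?h7 ?h8 in e.
rewrite ?mulr0 ?mul0r ?scaler0 ?addr0 in e.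
by move/eqP: e; rewrite scaler_eq0 (negbTE q2_nz) /= subr_eq0 => /eqP.
Qed.

Lemma c_SerBL_q (A : algType Cq) (f a b : A)
  (h0 : f * f * a - (qX + qX^-1) *: (f * a * f) + a * f * f = 0)
  (h1 : f * b = b * f)
  : f * f * (a * b - qX *: (b * a)) - (qX + qX^-1) *: (f * (a * b - qX *: (b * a)) * f) + (a * b - qX *: (b * a)) * f * f = 0.
Proof.
move/eqP: h0; rewrite -subr_eq0 => /eqP h0.
move/eqP: h1; rewrite -subr_eq0 => /eqP h1.
have e : ((f * f * (a * b - qX *: (b * a)) - (qX + qX^-1) *: (f * (a * b - qX *: (b * a)) * f) + (a * b - qX *: (b * a)) * f * f) - (0)) = (1) *: ((f * f * a - (qX + qX^-1) *: (f * a * f) + a * f * f - (0)) * b) + ((- 1)*qX) *: ((f * b - (b * f)) * f * a) + (1 + qX*qX) *: ((f * b - (b * f)) * a * f) + ((- 1)*qX) *: (f * (f * b - (b * f)) * a) + (qX^-1 + qX) *: (f * a * (f * b - (b * f))) + ((- 1)) *: (a * (f * b - (b * f)) * f) + ((- 1)) *: (a * f * (f * b - (b * f))) + ((- 1)*qX) *: (b * (f * f * a - (qX + qX^-1) *: (f * a * f) + a * f * f - (0))).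
  ncring [:: f; a; b].
rewrite ?h0 ?h1 in e.
rewrite ?mulr0 ?mul0r ?scaler0 ?addr0 in e.
by apply/eqP; rewrite -subr_eq0 e.
Qed.

Lemma c_SerBR_q (A : algType Cq) (f a b : A)
  (h0 : f * f * b - (qX + qX^-1) *: (f * b * f) + b * f * f = 0)
  (h1 : f * a = a * f)
  : f * f * (a * b - qX *: (b * a)) - (qX + qX^-1) *: (f * (a * b - qX *: (b * a)) * f) + (a * b - qX *: (b * a)) * f * f = 0.
Proof.
move/eqP: h0; rewrite -subr_eq0 => /eqP h0.
move/eqP: h1; rewrite -subr_eq0 => /eqP h1.
have e : ((f * f * (a * b - qX *: (b * a)) - (qX + qX^-1) *: (f * (a * b - qX *: (b * a)) * f) + (a * b - qX *: (b * a)) * f * f) - (0)) = ((- 1)*qX) *: ((f * f * b - (qX + qX^-1) *: (f * b * f) + b * f * f - (0)) * a) + (1) *: ((f * a - (a * f)) * f * b) + ((- 1)*qX^-1 + (- 1)*qX) *: ((f * a - (a * f)) * b * f) + (1) *: (f * (f * a - (a * f)) * b) + ((- 1) + (- 1)*qX*qX) *: (f * b * (f * a - (a * f))) + (1) *: (a * (f * f * b - (qX + qX^-1) *: (f * b * f) + b * f * f - (0))) + (qX) *: (b * (f * a - (a * f)) * f) + (qX) *: (b * f * (f * a - (a * f))).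
  ncring [:: f; a; b].
rewrite ?h0 ?h1 in e.
rewrite ?mulr0 ?mul0r ?scaler0 ?addr0 in e.
by apply/eqP; rewrite -subr_eq0 e.
Qed.

Lemma c_SerBL_qi (A : algType Cq) (f a b : A)
  (h0 : f * f * a - (qX + qX^-1) *: (f * a * f) + a * f * f = 0)
  (h1 : f * b = b * f)
  : f * f * (a * b - qX^-1 *: (b * a)) - (qX + qX^-1) *: (f * (a * b - qX^-1 *: (b * a)) * f) + (a * b - qX^-1 *: (b * a)) * f * f = 0.
Proof.
move/eqP: h0; rewrite -subr_eq0 => /eqP h0.
move/eqP: h1; rewrite -subr_eq0 => /eqP h1.
have e : ((f * f * (a * b - qX^-1 *: (b * a)) - (qX + qX^-1) *: (f * (a * b - qX^-1 *: (b * a)) * f) + (a * b - qX^-1 *: (b * a)) * f * f) - (0)) = (1) *: ((f * f * a - (qX + qX^-1) *: (f * a * f) + a * f * f - (0)) * b) + ((- 1)*qX^-1) *: ((f * b - (b * f)) * f * a) + (qX^-1*qX^-1 + 1) *: ((f * b - (b * f)) * a * f) + ((- 1)*qX^-1) *: (f * (f * b - (b * f)) * a) + (qX^-1 + qX) *: (f * a * (f * b - (b * f))) + ((- 1)) *: (a * (f * b - (b * f)) * f) + ((- 1)) *: (a * f * (f * b - (b * f))) + ((- 1)*qX^-1) *: (b * (f * f * a - (qX + qX^-1) *: (f * a * f) + a * f * f - (0))).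
  ncring [:: f; a; b].
rewrite ?h0 ?h1 in e.
rewrite ?mulr0 ?mul0r ?scaler0 ?addr0 in e.
by apply/eqP; rewrite -subr_eq0 e.
Qed.

Lemma c_SerBR_qi (A : algType Cq) (f a b : A)
  (h0 : f * f * b - (qX + qX^-1) *: (f * b * f) + b * f * f = 0)
  (h1 : f * a = a * f)
  : f * f * (a * b - qX^-1 *: (b * a)) - (qX + qX^-1) *: (f * (a * b - qX^-1 *: (b * a)) * f) + (a * b - qX^-1 *: (b * a)) * f * f = 0.
Proof.
move/eqP: h0; rewrite -subr_eq0 => /eqP h0.
move/eqP: h1; rewrite -subr_eq0 => /eqP h1.
have e : ((f * f * (a * b - qX^-1 *: (b * a)) - (qX + qX^-1) *: (f * (a * b - qX^-1 *: (b * a)) * f) + (a * b - qX^-1 *: (b * a)) * f * f) - (0)) = ((- 1)*qX^-1) *: ((f * f * b - (qX + qX^-1) *: (f * b * f) + b * f * f - (0)) * a) + (1) *: ((f * a - (a * f)) * f * b) + ((- 1)*qX^-1 + (- 1)*qX) *: ((f * a - (a * f)) * b * f) + (1) *: (f * (f * a - (a * f)) * b) + ((- 1)*qX^-1*qX^-1 + (- 1)) *: (f * b * (f * a - (a * f))) + (1) *: (a * (f * f * b - (qX + qX^-1) *: (f * b * f) + b * f * f - (0))) + (qX^-1) *: (b * (f * a - (a * f)) * f) + (qX^-1) *: (b * f * (f * a - (a * f))).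
  ncring [:: f; a; b].
rewrite ?h0 ?h1 in e.
rewrite ?mulr0 ?mul0r ?scaler0 ?addr0 in e.
by apply/eqP; rewrite -subr_eq0 e.
Qed.


Section Gen.
Variable A : algType Cq.
Definition br (c : Cq) (x y : A) := x * y - c *: (y * x).
Definition cm (x y : A) := x * y = y * x.
Definition qc (x y : A) := exists (s : bool) (z : int), x * y = ((-1) ^+ s * qX ^ z) *: (y * x).
Definition Ser (f x : A) := f * f * x - (qX + qX^-1) *: (f * x * f) + x * f * f.

Lemma cm_sym x y : cm x y -> cm y x. Proof. by []. Qed.
Lemma cm_mul x a b : cm x a -> cm x b -> cm x (a * b).
Proof. by rewrite /cm => ha hb; rewrite mulrA ha -mulrA hb mulrA. Qed.
Lemma cm_br x c a b : cm x a -> cm x b -> cm x (br c a b).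
Proof.
rewrite /cm /br => ha hb.
have h1 := cm_mul ha hb; have h2 := cm_mul hb ha.
by rewrite mulrBr mulrBl -scalerAr -scalerAl h1 h2.
Qed.

Lemma br_assoc (Y Xc : Cq) (z y w : A) : cm z w ->
  br Y z (br Xc y w) = br Xc (br Y z y) w.
Proof.
rewrite /cm /br => hzw.
rewrite !(mulrBr, mulrBl) -!(scalerAr, scalerAl) !scalerBr !scalerA !mulrA.
rewrite -[z * w * y]mulrA.
have -> : z * (w * y) = w * z * y by rewrite mulrA hzw.
have -> : y * w * z = y * z * w by rewrite -!mulrA hzw.
have K : forall a u v t : A, a - u - (v - t) = a - v - (u - t).
  by move=> a u v t; ncring [:: a; u; v; t].
rewrite K; congr (_ - (_ - _)); congr (_ *: _); exact: mulrC.
Qed.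

Lemma qc_cm x y : cm x y -> qc x y.
Proof. by move=> h; exists false, 0; rewrite expr0 expr0z mul1r scale1r. Qed.

Lemma sgnq_nz (s : bool) (z : int) : (-1) ^+ s * qX ^ z != 0.
Proof. by rewrite mulf_eq0 signr_eq0 /= expfz_eq0 (negbTE qX_nz) andbF. Qed.

Lemma qc_sym x y : qc x y -> qc y x.
Proof.
move=> [s [z h]]; exists s, (- z).
have -> : (-1) ^+ s * qX ^ (- z) = ((-1) ^+ s * qX ^ z)^-1.
  by rewrite invfM invr_expz invr_sign.
by rewrite h scalerA mulVf ?sgnq_nz // scale1r.
Qed.

Lemma qc_mulr x a b : qc x a -> qc x b -> qc x (a * b).
Proof.
move=> [s1 [z1 h1]] [s2 [z2 h2]]; exists (s1 (+) s2), (z1 + z2).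
rewrite mulrA h1 -scalerAl -(mulrA a x b) h2 -scalerAr scalerA mulrA; congr (_ *: _).
  by rewrite signr_addb expfzDr ?qX_nz //; ring.
by rewrite mulrA.
Qed.

Lemma qc_mull x a b : qc a x -> qc b x -> qc (a * b) x.
Proof. by move=> ha hb; apply/qc_sym/qc_mulr; apply/qc_sym. Qed.

Lemma qc_brr x c a b : qc x a -> qc x b -> qc x (br c a b).
Proof.
case=> [sa [za ha]]; case=> [sb [zb hb]].
exists (sa (+) sb), (za + zb).
have e1 : x * (a * b) = ((-1) ^+ (sa (+) sb) * qX ^ (za + zb)) *: (a * b * x).
  rewrite mulrA ha -scalerAl -(mulrA a x b) hb -scalerAr scalerA mulrA; congr (_ *: _).
    by rewrite signr_addb expfzDr ?qX_nz //; ring.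
  by rewrite mulrA.
have e2 : x * (b * a) = ((-1) ^+ (sa (+) sb) * qX ^ (za + zb)) *: (b * a * x).
  rewrite mulrA hb -scalerAl -(mulrA b x a) ha -scalerAr scalerA mulrA; congr (_ *: _).
    by rewrite signr_addb expfzDr ?qX_nz //; ring.
  by rewrite mulrA.
rewrite /br mulrBr -scalerAr e1 e2 mulrBl -scalerAl scalerBr; congr (_ - _).
by rewrite !scalerA mulrC.
Qed.

Lemma qc_brl x c a b : qc a x -> qc b x -> qc (br c a b) x.
Proof. by move=> ha hb; apply/qc_sym/qc_brr; apply/qc_sym. Qed.

Lemma qc1 x : qc x 1. Proof. by apply: qc_cm; rewrite /cm mulr1 mul1r. Qed.

Lemma qc_prod x (I : eqType) (s : seq I) (P : pred I) (G : I -> A) :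
  (forall i, i \in s -> P i -> qc x (G i)) -> qc x (\prod_(i <- s | P i) G i).
Proof.
elim: s => [|i s IH] h; first by rewrite big_nil; exact: qc1.
rewrite big_cons; case: ifP => Pi.
  apply: qc_mulr; first by apply: h; rewrite ?mem_head.
  by apply: IH => j js; apply: h; rewrite in_cons js orbT.
by apply: IH => j js; apply: h; rewrite in_cons js orbT.
Qed.

End Gen.


Lemma Ser_brL (A : algType Cq) (c : Cq) (f a b : A) : c = qX \/ c = qX^-1 ->
  Ser f a = 0 -> cm f b -> Ser f (br c a b) = 0.
Proof. by case=> -> h1 h2; rewrite /Ser /br; [exact: c_SerBL_q | exact: c_SerBL_qi]. Qed.
Lemma Ser_brR (A : algType Cq) (c : Cq) (f a b : A) : c = qX \/ c = qX^-1 ->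
  Ser f b = 0 -> cm f a -> Ser f (br c a b) = 0.
Proof. by case=> -> h1 h2; rewrite /Ser /br; [exact: c_SerBR_q | exact: c_SerBR_qi]. Qed.

Section Root.
Variables (m n : nat) (A : algType Cq) (F : nat -> A).
Local Notation N := (m + n)%N.
Hypothesis hm1 : (1 <= m)%N.
Hypothesis hn1 : (1 <= n)%N.
Hypothesis Fsq : F m * F m = 0.
Hypothesis Ffar : forall i j, (1 <= i < N)%N -> (1 <= j < N)%N ->
  (i.+1 < j)%N || (j.+1 < i)%N -> F i * F j = F j * F i.
Hypothesis Fser : forall i j, (1 <= i < N)%N -> (1 <= j < N)%N ->
  (i.+1 == j) || (j.+1 == i) -> i != m -> Ser (F i) (F j) = 0.

Local Notation X a b := (Fij m qX F a b).
Local Notation q_ c := (qi m qX c).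

Lemma q_le c : (c <= m)%N -> q_ c = qX. Proof. by rewrite /qi => ->. Qed.
Lemma q_gt c : (m < c)%N -> q_ c = qX^-1. Proof. by move=> h; rewrite /qi leqNgt h. Qed.
Lemma q_cases c : q_ c = qX \/ q_ c = qX^-1.
Proof. by rewrite /qi; case: ifP; [left|right]. Qed.

Lemma FgS a k : Fg m qX F a k.+1 = br (q_ (a + k).+1) (F (a + k).+1) (Fg m qX F a k).
Proof. by rewrite [LHS]/Fg -/(Fg m qX F a k) /br addrC. Qed.

Lemma X1 a : X a a.+1 = F a.
Proof. by rewrite /Fij subSn // subnn. Qed.

Lemma XS a b : (a < b)%N -> X a b.+1 = br (q_ b) (F b) (X a b).
Proof.
move=> ab; rewrite /Fij subSn; last exact: ltnW.
have e : (b - a = (b - a).-1.+1)%N by rewrite prednK // subn_gt0.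
rewrite [in LHS]e FgS.
have e2 : ((a + (b - a).-1).+1 = b)%N by lia.
by rewrite e2.
Qed.

Lemma Fcm k l : (1 <= k < N)%N -> (1 <= l < N)%N -> (k.+1 < l)%N || (l.+1 < k)%N -> cm (F k) (F l).
Proof. exact: Ffar. Qed.

Lemma cmX k a b : (1 <= a)%N -> (a < b)%N -> (b <= N)%N -> (1 <= k < N)%N ->
  (k.+1 < a)%N || (b < k)%N -> cm (F k) (X a b).
Proof.
move=> a1 ab bN kN; elim: b ab bN => [|b IH] ab bN hk; first by lia.
have [e|ab'] : (a = b) \/ (a < b)%N by lia.
  subst; rewrite X1; apply: Fcm; lia.
rewrite XS; last exact: ab'.
apply: cm_br; first by apply: Fcm; lia.
apply: IH; lia.
Qed.

Lemma Xind a c b : (1 <= a)%N -> (a < c)%N -> (c < b)%N -> (b <= N)%N ->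
  X a b = br (q_ c) (X c b) (X a c).
Proof.
move=> a1 ac; elim: b => [|b IH] cb bN; first by lia.
have [e|cb'] : (c = b) \/ (c < b)%N by lia.
  by subst; rewrite XS ?X1.
rewrite XS; last by lia.
rewrite IH; [|lia|lia].
rewrite br_assoc; first by rewrite -XS.
apply: cmX; lia.
Qed.

Lemma Xv a b : (1 <= a)%N -> (a.+1 < b)%N -> (b <= N)%N ->
  X a b = br (q_ a.+1) (X a.+1 b) (F a).
Proof. by move=> a1 ab bN; rewrite (@Xind a a.+1 b) ?X1. Qed.

Lemma SerH a b : (1 <= a)%N -> (a < b)%N -> (b < N)%N -> b != m -> Ser (F b) (X a b) = 0.
Proof.
move=> a1; elim: b => [|b IH] ab bN bm; first by lia.
have [e|ab'] : (a = b) \/ (a < b)%N by lia.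
  subst; rewrite X1; apply: Fser; lia.
rewrite XS; last exact: ab'.
apply: Ser_brL; first exact: q_cases.
  apply: Fser; lia.
apply: cmX; lia.
Qed.

Lemma SerV a b : (1 <= a)%N -> (a.+1 < b)%N -> (b <= N)%N -> a != m -> Ser (F a) (X a.+1 b) = 0.
Proof.
move=> a1 ab bN am.
have [e|ab'] : (b = a.+2) \/ (a.+2 < b)%N by lia.
  subst; rewrite X1; apply: Fser; lia.
rewrite Xv; [|lia|lia|lia].
apply: Ser_brR; first exact: q_cases.
  apply: Fser; lia.
apply: cmX; lia.
Qed.

Lemma R1m t : (m < t)%N -> (t <= N)%N -> X m t * X m t = 0.
Proof.
elim: t => [|t IH] mt tN; first by lia.
have [e|mt'] : (t = m) \/ (m < t)%N by lia.
  by subst; rewrite X1.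
rewrite XS; last exact: mt'.
rewrite q_gt; last exact: mt'.
apply: c_R1h; first by apply: IH; lia.
apply: SerH; lia.
Qed.

Lemma R1 s t : (1 <= s <= m)%N -> (m < t)%N -> (t <= N)%N -> X s t * X s t = 0.
Proof.
move=> /andP [s1 sm] mt tN.
have [d es] : exists d, s = (m - d)%N by exists (m - s)%N; lia.
subst s.
have : (d < m)%N by lia.
clear sm s1.
elim: d => [|d IH] dm; first by rewrite subn0 R1m.
rewrite Xv; [|lia|lia|lia].
have e2 : ((m - d.+1).+1 = m - d)%N by lia.
rewrite e2 q_le; last by lia.
apply: c_R1v; first by apply: IH; lia.
rewrite -e2; apply: SerV; lia.
Qed.


Lemma qc_negq (x y : A) : x * y = (- qX) *: (y * x) -> qc x y.
Proof. by move=> h; exists true, 1; rewrite expr1 expr1z mulN1r. Qed.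
Lemma qc_neg1 (x y : A) : x * y = - (y * x) -> qc x y.
Proof. by move=> h; exists true, 0; rewrite expr1 expr0z mulr1 scaleN1r. Qed.

Lemma colqc a b t : (1 <= a)%N -> (a < b)%N -> (b <= m)%N -> (m < t)%N -> (t <= N)%N ->
  qc (X b t) (X a t).
Proof.
move=> a1 ab bm mt tN.
have [d ed] : exists d, a = (b - d.+1)%N by exists (b - a.+1)%N; lia.
subst a; elim: d a1 ab => [|d IH] a1 ab.
  rewrite (@Xv (b - 1) t); [|lia|lia|lia].
  have e : ((b - 1).+1 = b)%N by lia.
  rewrite e q_le; last by lia.
  apply: qc_negq; apply: c_col; apply: R1; lia.
rewrite (@Xv (b - d.+2) t); [|lia|lia|lia].
have e : ((b - d.+2).+1 = b - d.+1)%N by lia.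
rewrite e; apply: qc_brr; first by apply: IH; lia.
apply: qc_sym; apply: qc_cm; apply: cmX; lia.
Qed.

Lemma rowqc s a b : (1 <= s <= m)%N -> (m < a)%N -> (a < b)%N -> (b <= N)%N ->
  qc (X s a) (X s b).
Proof.
move=> sm ma; elim: b => [|b IH] ab bN; first by lia.
have [e|ab'] : (b = a) \/ (a < b)%N by lia.
  subst b; rewrite XS; last by lia.
  rewrite q_gt; last by lia.
  apply: qc_negq; apply: c_row; apply: R1; lia.
rewrite XS; last by lia.
apply: qc_brr; last by apply: IH; lia.
apply: qc_sym; apply: qc_cm; apply: cmX; lia.
Qed.

Lemma E5 k t : (1 <= k < m)%N -> (m < t)%N -> (t <= N)%N -> cm (F k) (X k t * X k.+1 t).
Proof.
move=> km mt tN.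
rewrite Xv; [|lia|lia|lia].
rewrite q_le; last by lia.
apply: c_E5; first by apply: R1; lia.
apply: SerV; lia.
Qed.

Lemma BV a : (1 <= a)%N -> (a.+2 <= m)%N -> cm (F a.+1) (X a a.+3).
Proof.
move=> a1 am.
rewrite XS; last by lia.
rewrite XS; last by lia.
rewrite X1 q_le; last by lia.
rewrite q_le; last by lia.
have [e|lt] : (a.+2 = m) \/ (a.+2 < m)%N by lia.
  apply: c_BVt.
  - apply: Fcm; lia.
  - apply: Fser; lia.
  - apply: Fser; lia.
  - apply: Fser; lia.
  - by rewrite e.
apply: c_BVe.
- apply: Fcm; lia.
- apply: Fser; lia.
- apply: Fser; lia.
- apply: Fser; lia.
- apply: Fser; lia.
Qed.

Lemma BH a : (m <= a)%N -> (a.+3 <= N)%N -> cm (F a.+1) (X a a.+3).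
Proof.
move=> ma aN.
rewrite XS; last by lia.
rewrite XS; last by lia.
rewrite X1 q_gt; last by lia.
rewrite q_gt; last by lia.
have [e|lt] : (a = m) \/ (m < a)%N by lia.
  apply: c_BHb.
  - apply: Fcm; lia.
  - apply: Fser; lia.
  - by rewrite e.
  - apply: Fser; lia.
  - apply: Fser; lia.
apply: c_BHe.
- apply: Fcm; lia.
- apply: Fser; lia.
- apply: Fser; lia.
- apply: Fser; lia.
- apply: Fser; lia.
Qed.

Lemma intX a s t : (1 <= s <= a)%N -> (a.+3 <= t)%N -> (t <= N)%N ->
  cm (F a.+1) (X a a.+3) -> cm (F a.+1) (X s t).
Proof.
move=> sa at_ tN base.
have hat : cm (F a.+1) (X a t).
  have [e|lt] : (t = a.+3) \/ (a.+3 < t)%N by lia.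
    by subst t.
  rewrite (@Xind a a.+3 t); [|lia|lia|lia|lia].
  apply: cm_br => //; apply: cmX; lia.
have [e|lt] : (s = a) \/ (s < a)%N by lia.
  by subst s.
rewrite (@Xind s a t); [|lia|lia|lia|lia].
apply: cm_br => //; apply: cmX; lia.
Qed.

Lemma intV k s t : (1 <= s)%N -> (s < k)%N -> (k < m)%N -> (m < t)%N -> (t <= N)%N ->
  cm (F k) (X s t).
Proof.
case: k => [|k] s1 sk km mt tN; first by lia.
apply: intX; [lia|lia|lia|].
apply: BV; lia.
Qed.

Lemma intH k s t : (1 <= s <= m)%N -> (m < k)%N -> (k.+2 <= t)%N -> (t <= N)%N ->
  cm (F k) (X s t).
Proof.
case: k => [|k] sm mk kt tN; first by lia.
apply: intX; [lia|lia|lia|].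
apply: BH; lia.
Qed.

Definition Ccol t := \prod_(a <- iota 1 m) X a t.

Lemma qcV k t : (1 <= k < m)%N -> (m < t)%N -> (t <= N)%N -> qc (F k) (Ccol t).
Proof.
move=> km mt tN.
have e : iota 1 m = iota 1 k.-1 ++ [:: k; k.+1] ++ iota k.+2 (m - k.+1).
  rewrite -[in LHS](_ : (k.-1 + (2 + (m - k.+1)) = m)%N); last by lia.
  rewrite iotaD iotaD /=.
  by congr (_ ++ _ :: _ :: iota _ _); lia.
rewrite /Ccol e !big_cat /= !big_cons big_nil mulr1.
apply: qc_mulr; [|apply: qc_mulr].
- apply: qc_prod => a; rewrite mem_iota => ha _.
  apply: qc_cm; apply: intV; lia.
- apply: qc_cm; apply: E5; lia.
- apply: qc_prod => a; rewrite mem_iota => ha _.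
  apply: qc_cm; apply: cmX; lia.
Qed.

Lemma qcH k t : (m < k)%N -> (k < N)%N -> (m < t)%N -> (t <= N)%N -> k != t.-1 -> k != t ->
  qc (F k) (Ccol t).
Proof.
move=> mk kN mt tN k1 k2.
apply: qc_prod => a; rewrite mem_iota => ha _.
apply: qc_cm.
have [lt|gt] : (k.+2 <= t)%N \/ (t < k)%N by lia.
  apply: intH; lia.
apply: cmX; lia.
Qed.


Hypothesis Fext : (2 <= m)%N -> (2 <= n)%N -> X m.-1 m.+2 * F m + F m * X m.-1 m.+2 = 0.

Lemma nestM s t : (1 <= s)%N -> (s < m)%N -> (m.+2 <= t)%N -> (t <= N)%N -> qc (F m) (X s t).
Proof.
move=> s1 sm mt tN.
have base : qc (F m) (X m.-1 m.+2).
  apply: qc_neg1; apply/eqP; rewrite -subr_eq0 opprK addrC Fext //; lia.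
have h2 : qc (F m) (X s m.+2).
  have [e|lt] : (s = m.-1) \/ (s < m.-1)%N by lia.
    by subst s.
  rewrite (@Xind s m.-1 m.+2); [|lia|lia|lia|lia].
  apply: qc_brr => //; apply: qc_cm; apply: cmX; lia.
have [e|lt] : (t = m.+2) \/ (m.+2 < t)%N by lia.
  by subst t.
rewrite (@Xind s m.+2 t); [|lia|lia|lia|lia].
apply: qc_brr => //; apply: qc_cm; apply: cmX; lia.
Qed.

Lemma qcM t : (m.+2 <= t)%N -> (t <= N)%N -> qc (F m) (Ccol t).
Proof.
move=> mt tN.
have e : iota 1 m = iota 1 m.-1 ++ [:: m].
  rewrite -[in LHS](_ : (m.-1 + 1 = m)%N); last by lia.
  by rewrite iotaD /=; congr (_ ++ [:: _]); lia.
rewrite /Ccol e big_cat /= big_cons big_nil mulr1.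
apply: qc_mulr.
  apply: qc_prod => a; rewrite mem_iota => ha _.
  apply: nestM; lia.
rewrite -[F m]X1; apply: rowqc; lia.
Qed.

Lemma Xvm t : (2 <= m)%N -> (m < t)%N -> (t <= N)%N -> X m.-1 t = br qX (X m t) (F m.-1).
Proof.
move=> m2 mt tN; rewrite Xv; [|lia|lia|lia].
have e : (m.-1.+1 = m)%N by lia.
by rewrite e q_le.
Qed.

Lemma Nt t : (2 <= m)%N -> (m < t)%N -> (t < N)%N ->
  X m.-1 t.+1 * X m t + X m t * X m.-1 t.+1 = 0.
Proof.
move=> m2; elim: t => [|t IH] mt tN; first by lia.
have [e|lt] : (t = m) \/ (m < t)%N by lia.
  subst t; rewrite X1; apply: Fext; lia.
have IH' := IH lt (ltnW tN).
rewrite (@XS m.-1 t.+1); last by lia.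
rewrite (@XS m.-1 t); last by lia.
rewrite (@XS m t); last by lia.
rewrite (@XS m.-1 t) in IH'; last by lia.
rewrite Xvm in IH'; [|lia|lia|lia].
rewrite Xvm; [|lia|lia|lia].
rewrite !q_gt; [|lia|lia].
rewrite q_gt in IH'; last by lia.
apply: c_NS.
- apply: R1; lia.
- apply: Fcm; lia.
- apply: Fcm; lia.
- apply: cmX; lia.
- apply: Fser; lia.
- apply: Fser; lia.
- apply: SerH; lia.
- have e : (m.-1.+1 = m)%N by lia.
  have := @SerV m.-1 t; rewrite e; apply; lia.
- exact: IH'.
Qed.


Lemma CROSS s t : (1 <= s)%N -> (s < m)%N -> (m < t)%N -> (t < N)%N ->
  exists W, X m t.+1 * X s t = - (X s t * X m t.+1) + W * X m t.
Proof.
move=> s1 sm mt tN.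
have [d ed] : exists d, s = (m.-1 - d)%N by exists (m.-1 - s)%N; lia.
subst s; elim: d s1 sm => [|d IH] s1 sm.
  rewrite subn0 (@XS m t); last by lia.
  rewrite Xvm; [|lia|lia|lia].
  rewrite q_gt; last by lia.
  eexists; apply: c_CRb; first by apply: R1; lia.
  have := @Nt t; rewrite (@XS m.-1 t); last by lia.
  rewrite Xvm; [|lia|lia|lia].
  rewrite q_gt; last by lia.
  by apply; lia.
have [W hW] := IH ltac:(lia) ltac:(lia).
rewrite (@Xv (m.-1 - d.+1) t); [|lia|lia|lia].
have e : ((m.-1 - d.+1).+1 = m.-1 - d)%N by lia.
rewrite e q_le; last by lia.
eexists; apply: c_CRs.
- by apply/esym; apply: cmX; lia.
- by apply/esym; apply: cmX; lia.
- exact: hW.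
Qed.

Lemma qcB t : (m < t)%N -> (t < N)%N -> qc (X m t.+1) (Ccol t).
Proof.
move=> mt tN.
set B := X m t.+1; set Y := X m t.
have e : iota 1 m = iota 1 m.-1 ++ [:: m].
  rewrite -[in LHS](_ : (m.-1 + 1 = m)%N); last by lia.
  by rewrite iotaD /=; congr (_ ++ [:: _]); lia.
rewrite /Ccol e big_cat /= big_cons big_nil mulr1.
have key : forall l : seq nat, all (fun a => (1 <= a < m)%N) l ->
  exists (s : bool) (z : int), B * (\prod_(a <- l) X a t * Y)
     = ((-1) ^+ s * qX ^ z) *: (\prod_(a <- l) X a t * (B * Y)).
  elim=> [|a l IH] /=.
    by move=> _; exists false, 0; rewrite !big_nil !mul1r expr0z scale1r.
  move=> /andP [ha hl].
  have [s [z hz]] := IH hl.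
  have [W hW] := @CROSS a t ltac:(lia) ltac:(lia) mt tN.
  have hYl : Y * (\prod_(b <- l) X b t) * Y = 0.
    have : qc Y (\prod_(b <- l) X b t).
      apply: qc_prod => b hb _; apply: colqc; move/allP: hl => /(_ b hb); lia.
    case=> s' [z' h]; rewrite h -scalerAl -mulrA.
    by rewrite (@R1 m t) ?mulr0 ?scaler0 //; lia.
  exists (~~ s), z.
  rewrite !big_cons.
  set P := \prod_(b <- l) X b t.
  rewrite -(mulrA (X a t) P Y) (mulrA B) hW mulrDl mulNr -(mulrA (X a t) B) hz.
  rewrite -(mulrA W Y) (mulrA Y P Y) hYl mulr0 addr0.
  by rewrite signrN mulNr scaleNr -!scalerAr -(mulrA (X a t)).
have [s [z hz]] := key (iota 1 m.-1) ltac:(by apply/allP => a; rewrite mem_iota; lia).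
have [s' [z' hz']] : qc B Y by apply: qc_sym; apply: rowqc; lia.
exists (s (+) s'), (z + z').
rewrite hz hz' -scalerAr scalerA mulrA; congr (_ *: _).
  by rewrite signr_addb expfzDr ?qX_nz //; ring.
by rewrite mulrA.
Qed.

Lemma TT1 i j t : (1 <= i <= m)%N -> (m < j)%N -> (j < t)%N -> (t <= N)%N ->
  qc (X i j) (Ccol t).
Proof.
move=> im mj jt tN.
have hm : forall j', (m < j')%N -> (j' < t)%N -> qc (X m j') (Ccol t).
  elim=> [|j' IH] mj' jt'; first by lia.
  have [e|lt] : (j' = m) \/ (m < j')%N by lia.
    subst j'; rewrite X1; apply: qcM; lia.
  rewrite XS; last by lia.
  apply: qc_brl; last by apply: IH; lia.
  apply: qcH; lia.
have [d ed] : exists d, i = (m - d)%N by exists (m - i)%N; lia.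
subst i; move: im; elim: d => [|d IH] im; first by rewrite subn0; apply: hm.
rewrite (@Xv (m - d.+1) j); [|lia|lia|lia].
have e : ((m - d.+1).+1 = m - d)%N by lia.
rewrite e; apply: qc_brl; first by apply: IH; lia.
apply: qcV; lia.
Qed.

Lemma TT2 i j t : (1 <= i <= m)%N -> (m < t)%N -> (t < j)%N -> (j <= N)%N ->
  qc (X i j) (Ccol t).
Proof.
move=> im mt tj jN.
have h1 : forall i', (1 <= i' <= m)%N -> qc (X i' t.+1) (Ccol t).
  move=> i' hi'.
  have [d ed] : exists d, i' = (m - d)%N by exists (m - i')%N; lia.
  subst i'; move: hi'; elim: d => [|d IH] hi'; first by rewrite subn0; apply: qcB; lia.
  rewrite (@Xv (m - d.+1) t.+1); [|lia|lia|lia].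
  have e : ((m - d.+1).+1 = m - d)%N by lia.
  rewrite e; apply: qc_brl; first by apply: IH; lia.
  apply: qcV; lia.
elim: j tj jN => [|j IH] tj jN; first by lia.
have [e|lt] : (j = t) \/ (t < j)%N by lia.
  by subst j; apply: h1.
rewrite XS; last by lia.
apply: qc_brl; last by apply: IH; lia.
apply: qcH; lia.
Qed.


Lemma prod_true_in (s : seq nat) (P : pred nat) (G : nat -> A) :
  (forall a, a \in s -> P a) -> \prod_(a <- s | P a) G a = \prod_(a <- s) G a.
Proof.
move=> h; rewrite big_mkcond; apply: eq_big_seq => a ha /=.
by rewrite h.
Qed.

Lemma prod_false_in (s : seq nat) (P : pred nat) (G : nat -> A) :
  (forall a, a \in s -> ~~ P a) -> \prod_(a <- s | P a) G a = 1.
Proof. by move=> h; apply: big1_seq => a /andP [pa ha]; move: (h a ha); rewrite pa. Qed.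

Lemma FI_cols (P : pred (nat * nat)) :
  FI m n qX F P = \prod_(b <- rev (iota m.+1 n)) \prod_(a <- iota 1 m | P (a, b)) X a b.
Proof.
rewrite /FI /I1seq big_flatten /= big_map; apply: eq_bigr => b _.
by rewrite big_map.
Qed.

Lemma FI_split (P : pred (nat * nat)) j : (m < j <= N)%N ->
  FI m n qX F P =
  \prod_(b <- rev (iota j.+1 (N - j))) \prod_(a <- iota 1 m | P (a, b)) X a b *
  (\prod_(a <- iota 1 m | P (a, j)) X a j *
   \prod_(b <- rev (iota m.+1 (j - m.+1))) \prod_(a <- iota 1 m | P (a, b)) X a b).
Proof.
move=> hj; rewrite FI_cols.
have e : iota m.+1 n = iota m.+1 (j - m.+1) ++ [:: j] ++ iota j.+1 (N - j).
  rewrite -[in LHS](_ : ((j - m.+1) + (1 + (N - j)) = n)%N); last by lia.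
  rewrite iotaD iotaD /=.
  by congr (_ ++ _ :: iota _ _); lia.
by rewrite e !rev_cat /= !big_cat /= big_cons big_nil mulr1 mulrA.
Qed.

Lemma iota_split i : (1 <= i <= m)%N ->
  iota 1 m = iota 1 i.-1 ++ [:: i] ++ iota i.+1 (m - i).
Proof.
move=> hi.
rewrite -[in LHS](_ : (i.-1 + (1 + (m - i)) = m)%N); last by lia.
rewrite iotaD iotaD /=.
by congr (_ ++ _ :: iota _ _); lia.
Qed.

Lemma main_sec i j : (1 <= i <= m)%N -> (m < j <= N)%N ->
  exists (z1 z2 : int) (s1 s2 : bool),
    X i j * F_lt m n qX F (i, j) = ((-1) ^+ s1 * qX ^ z1) *: F_le m n qX F (i, j)
  /\ F_gt m n qX F (i, j) * X i j = ((-1) ^+ s2 * qX ^ z2) *: F_ge m n qX F (i, j).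
Proof.
move=> hi hj.
set Pre := \prod_(b <- rev (iota j.+1 (N - j))) Ccol b.
set Post := \prod_(b <- rev (iota m.+1 (j - m.+1))) Ccol b.
set L := \prod_(a <- iota 1 i.-1) X a j.
set R := \prod_(a <- iota i.+1 (m - i)) X a j.
have ePre : forall P : pred (nat * nat), (forall a b, (j < b)%N -> P (a, b)) ->
    \prod_(b <- rev (iota j.+1 (N - j))) \prod_(a <- iota 1 m | P (a, b)) X a b = Pre.
  move=> P hP; apply: eq_big_seq => b; rewrite mem_rev mem_iota => hb.
  by rewrite prod_true_in // => a _; apply: hP; lia.
have ePost : forall P : pred (nat * nat), (forall a b, (b < j)%N -> ~~ P (a, b)) ->
    \prod_(b <- rev (iota m.+1 (j - m.+1))) \prod_(a <- iota 1 m | P (a, b)) X a b = 1.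
  move=> P hP; apply: big1_seq => b /andP [_]; rewrite mem_rev mem_iota => hb.
  by rewrite prod_false_in // => a _; apply: hP; lia.
have ePost' : forall P : pred (nat * nat), (forall a b, (b < j)%N -> P (a, b)) ->
    \prod_(b <- rev (iota m.+1 (j - m.+1))) \prod_(a <- iota 1 m | P (a, b)) X a b = Post.
  move=> P hP; apply: eq_big_seq => b; rewrite mem_rev mem_iota => hb.
  by rewrite prod_true_in // => a _; apply: hP; lia.
have ePre' : forall P : pred (nat * nat), (forall a b, (j < b)%N -> ~~ P (a, b)) ->
    \prod_(b <- rev (iota j.+1 (N - j))) \prod_(a <- iota 1 m | P (a, b)) X a b = 1.
  move=> P hP; apply: big1_seq => b /andP [_]; rewrite mem_rev mem_iota => hb.
  by rewrite prod_false_in // => a _; apply: hP; lia.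
have ecolA : forall P : pred nat, (forall a, (a < i)%N -> P a) ->
    (forall a, (i < a)%N -> ~~ P a) ->
    \prod_(a <- iota 1 m | P a) X a j = L * (if P i then X i j else 1).
  move=> P h1 h3; rewrite (iota_split hi) !big_cat /= big_cons big_nil.
  rewrite (@prod_false_in (iota i.+1 (m - i)) P); last by move=> a; rewrite mem_iota => ha; apply: h3; lia.
  rewrite (@prod_true_in (iota 1 i.-1)); last by move=> a; rewrite mem_iota => ha; apply: h1; lia.
  by case: (P i); rewrite ?mulr1.
have ecolB : forall P : pred nat, (forall a, (a < i)%N -> ~~ P a) ->
    (forall a, (i < a)%N -> P a) ->
    \prod_(a <- iota 1 m | P a) X a j = (if P i then X i j else 1) * R.
  move=> P h1 h3; rewrite (iota_split hi) !big_cat /= big_cons big_nil.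
  rewrite (@prod_false_in (iota 1 i.-1) P); last by move=> a; rewrite mem_iota => ha; apply: h1; lia.
  rewrite (@prod_true_in (iota i.+1 (m - i))); last by move=> a; rewrite mem_iota => ha; apply: h3; lia.
  by case: (P i); rewrite ?mulr1 ?mul1r.
have Elt : F_lt m n qX F (i, j) = Pre * L.
  rewrite /F_lt (FI_split _ hj).
  rewrite (ePre (fun p => precI1 p (i, j))); last by move=> *; rewrite /precI1 /=; lia.
  rewrite (ePost (fun p => precI1 p (i, j))); last by move=> *; rewrite /precI1 /=; lia.
  rewrite (ecolA (fun a => precI1 (a, j) (i, j))); [|by move=> *; rewrite /precI1 /=; lia|by move=> *; rewrite /precI1 /=; lia].
  have -> : precI1 (i, j) (i, j) = false by rewrite /precI1 /=; lia.
  by rewrite !mulr1.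
have Ele : F_le m n qX F (i, j) = Pre * (L * X i j).
  rewrite /F_le (FI_split _ hj).
  rewrite (ePre (fun p => precI1 p (i, j) || (p == (i, j)))); last by move=> *; rewrite /precI1 /= ?xpair_eqE; lia.
  rewrite (ePost (fun p => precI1 p (i, j) || (p == (i, j)))); last by move=> *; rewrite /precI1 /= ?xpair_eqE; lia.
  rewrite (ecolA (fun a => precI1 (a, j) (i, j) || ((a, j) == (i, j)))); [|by move=> *; rewrite /precI1 /= ?xpair_eqE; lia|by move=> *; rewrite /precI1 /= ?xpair_eqE; lia].
  have -> : precI1 (i, j) (i, j) || ((i, j) == (i, j)) = true by rewrite /precI1 /= ?xpair_eqE; lia.
  by rewrite !mulr1.
have Egt : F_gt m n qX F (i, j) = R * Post.
  rewrite /F_gt (FI_split _ hj).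
  rewrite (ePre' (fun p => precI1 (i, j) p)); last by move=> *; rewrite /precI1 /=; lia.
  rewrite (ePost' (fun p => precI1 (i, j) p)); last by move=> *; rewrite /precI1 /=; lia.
  rewrite (ecolB (fun a => precI1 (i, j) (a, j))); [|by move=> *; rewrite /precI1 /=; lia|by move=> *; rewrite /precI1 /=; lia].
  have -> : precI1 (i, j) (i, j) = false by rewrite /precI1 /=; lia.
  by rewrite !mul1r.
have Ege : F_ge m n qX F (i, j) = X i j * R * Post.
  rewrite /F_ge (FI_split _ hj).
  rewrite (ePre' (fun p => precI1 (i, j) p || (p == (i, j)))); last by move=> *; rewrite /precI1 /= ?xpair_eqE; lia.
  rewrite (ePost' (fun p => precI1 (i, j) p || (p == (i, j)))); last by move=> *; rewrite /precI1 /= ?xpair_eqE; lia.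
  rewrite (ecolB (fun a => precI1 (i, j) (a, j) || ((a, j) == (i, j)))); [|by move=> *; rewrite /precI1 /= ?xpair_eqE; lia|by move=> *; rewrite /precI1 /= ?xpair_eqE; lia].
  have -> : precI1 (i, j) (i, j) || ((i, j) == (i, j)) = true by rewrite /precI1 /= ?xpair_eqE; lia.
  by rewrite mul1r.
have qPre : qc (X i j) Pre.
  apply: qc_prod => b; rewrite mem_rev mem_iota => hb _; apply: TT1; lia.
have qPost : qc (X i j) Post.
  apply: qc_prod => b; rewrite mem_rev mem_iota => hb _; apply: TT2; lia.
have qL : qc (X i j) L.
  apply: qc_prod => a; rewrite mem_iota => ha _; apply: colqc; lia.
have qR : qc (X i j) R.
  apply: qc_prod => a; rewrite mem_iota => ha _; apply: qc_sym; apply: colqc; lia.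
have [s1 [z1 h1]] := qc_mulr qPre qL.
have [s2 [z2 h2]] := qc_sym (qc_mulr qR qPost).
exists z1, z2, s1, s2; split.
  by rewrite Elt h1 Ele mulrA.
by rewrite Egt h2 Ege mulrA.
Qed.




End Root.


Theorem proposition5p4 (m n : nat) (hm : (1 <= m)%N) (hn : (1 <= n)%N)
  (A : algType Cq) (Kp Km E F : nat -> A)
  (rels : Uq_rels m n qX Kp Km E F)
  (i j : nat) (hi : (1 <= i <= m)%N) (hj : (m < j <= m + n)%N) :
  exists (z1 z2 : int) (s1 s2 : bool),
    Fij m qX F i j * F_lt m n qX F (i, j)
      = ((-1) ^+ s1 * qX ^ z1) *: F_le m n qX F (i, j)
  /\ F_gt m n qX F (i, j) * Fij m qX F i j
      = ((-1) ^+ s2 * qX ^ z2) *: F_ge m n qX F (i, j).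
Proof.
have Fext : (2 <= m)%N -> (2 <= n)%N ->
    Fij m qX F m.-1 m.+2 * F m + F m * Fij m qX F m.-1 m.+2 = 0.
  move=> h1 h2; have := F_extra rels h1 h2.
  by rewrite /sbr /= expr1 mulN1r opprK.
exact: (main_sec hm hn (F_sq rels) (F_far rels) (F_serre rels) Fext hi hj).
Qed.
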